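(* Let $G$ be a $c$-edge-colored multigraph (without loops) with $n$ vertices such that every vertex is incident to at least two edges of different colors. Suppose at least one vertex is incident to at least three edges of pairwise different colors, and that $\delta_{dym}(x)+\delta_{dym}(y)\ge n+1$ for every pair of distinct vertices $x,y$. Then $G$ has a properly colored hamiltonian cycle.
   Context: A $c$-edge-colored multigraph is a finite multigraph without loops (parallel edges allowed) together with a map $\phi:E(G)\to\{1,\ldots,c\}$. For $u,v\in V(G)$, $E_{uv}$ is the set of edges with end vertices $u$ and $v$. Here $\delta_{dym}(x)$ is the number of vertices $y$ such that $E_{xy}$ contains two edges of different colors. A properly colored (PC) hamiltonian cycle is a cyclic sequence $(x_1,f_1,x_2,f_2,\ldots,x_n,f_n,x_1)$ containing every vertex exactly once, with $f_i\in E_{x_ix_{i+1}}$ (indices mod $n$), such that any two consecutive edges, including $f_n$ and $f_1$, have different colors. *)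

(* Defs.v *)
From mathcomp Require Import all_boot.
Set Implicit Arguments. Unset Strict Implicit. Unset Printing Implicit Defensive.

(* A c-edge-colored multigraph: vertex type V, edge type E (parallel edges
   allowed since distinct edges may have the same endpoints), endpoints
   src/dst with src e != dst e (no loops), coloring phi : E -> 'I_c
   (colors 1..c represented as 0..c-1). *)
Section Multigraph.
Variables (V E : finType) (c : nat) (src dst : E -> V) (phi : E -> 'I_c).

Definition incident (e : E) (x : V) : bool := (src e == x) || (dst e == x).

Definition joins (e : E) (u v : V) : bool :=
  ((src e == u) && (dst e == v)) || ((src e == v) && (dst e == u)).

Definition delta_dym (x : V) : nat :=
  #|[set y : V | [exists e1 : E, exists e2 : E,
       [&& joins e1 x y, joins e2 x y & phi e1 != phi e2]]]|.

Definition PC_ham_cycle (x : 'I_#|V| -> V) (f : 'I_#|V| -> E) : Prop :=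
  injective x /\
  forall i : 'I_#|V|, joins (f i) (x i) (x (ordS i)) /\ phi (f i) != phi (f (ordS i)).

Definition has_PC_ham_cycle : Prop :=
  exists (x : 'I_#|V| -> V) (f : 'I_#|V| -> E), PC_ham_cycle x f.

End Multigraph.

(* Main.v *)
Require Import Defs.
From mathcomp Require Import all_boot zify.
Set Implicit Arguments. Unset Strict Implicit. Unset Printing Implicit Defensive.

Section Flip.
Variables (V : finType).
Local Notation n := #|V|.

Definition injn (q : nat -> V) := forall i j, i < n -> j < n -> q i = q j -> i = j.

Definition flip (a b : nat) (q : nat -> V) (k : nat) :=
  if (a <= k) && (k < b) then q (a + b - 1 - k) else q k.

Lemma flip_inj a b q : b <= n -> injn q -> injn (flip a b q).
Proof.
move=> hb hq i j hi hj; rewrite /flip.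
case: (leqP a i) => /= hai; case: (ltnP i b) => /= hib;
case: (leqP a j) => /= haj; case: (ltnP j b) => /= hjb => /hq; lia.
Qed.

Lemma flip_out a b q k : (k < a) || (b <= k) -> flip a b q k = q k.
Proof. rewrite /flip; case: (leqP a k); case: (ltnP k b) => //=; lia. Qed.

Lemma flip_path (r : rel V) (rs : symmetric r) a b q : 0 < a < b -> b <= n ->
  (forall k, k.+1 < n -> k.+1 != a -> k.+1 != b -> r (q k) (q k.+1)) ->
  r (q a.-1) (q b.-1) -> (b < n -> r (q a) (q b)) ->
  forall k, k.+1 < n -> r (flip a b q k) (flip a b q k.+1).
Proof.
move=> /andP[a0 ab] bn hq h1 h2 k kn; rewrite /flip.
case: (leqP a k) => /= hak; case: (ltnP k b) => /= hkb;
case: (leqP a k.+1) => /= hak1; case: (ltnP k.+1 b) => /= hk1b; try lia.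
- rewrite rs; have -> : a + b - 1 - k = (a + b - 1 - k.+1).+1 by lia.
  apply: hq; lia.
- have -> : a + b - 1 - k = a by lia. have -> : k.+1 = b by lia. by apply: h2; lia.
- apply: hq; lia.
- have -> : k = a.-1 by lia. have -> : a + b - 1 - a.-1.+1 = b.-1 by lia. done.
- apply: hq; lia.
Qed.

Lemma flip_track a b q k : a < b -> b <= n -> k.+1 < n -> k.+1 != a -> k.+1 != b ->
  exists k', k'.+1 < n /\
   ((flip a b q k' = q k /\ flip a b q k'.+1 = q k.+1) \/
    (flip a b q k' = q k.+1 /\ flip a b q k'.+1 = q k)).
Proof.
move=> ab bn kn ka kb.
case: (boolP ((k.+1 < a) || (b <= k))) => h.
  exists k; split => //; left; rewrite !flip_out //; lia.
exists (a + b - 2 - k); split; first lia. right; rewrite /flip.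
case: (leqP a (a + b - 2 - k)) => /= h1; case: (ltnP (a + b - 2 - k) b) => /= h2; try lia.
case: (leqP a (a + b - 2 - k).+1) => /= h3; case: (ltnP (a + b - 2 - k).+1 b) => /= h4; try lia.
split; congr q; lia.
Qed.

Lemma flip_back a b q k : a < b -> b <= n -> k.+1 < n -> k.+1 != a -> k.+1 != b ->
  exists k', k'.+1 < n /\
   ((flip a b q k = q k' /\ flip a b q k.+1 = q k'.+1) \/
    (flip a b q k = q k'.+1 /\ flip a b q k.+1 = q k')).
Proof.
move=> ab bn kn ka kb.
case: (boolP ((k.+1 < a) || (b <= k))) => h.
  exists k; split => //; left; rewrite !flip_out //; lia.
exists (a + b - 2 - k); split; first lia. right; rewrite /flip.
case: (leqP a k) => /= h1; case: (ltnP k b) => /= h2; try lia.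
case: (leqP a k.+1) => /= h3; case: (ltnP k.+1 b) => /= h4; try lia.
split; congr q; lia.
Qed.

End Flip.


Section Ham.
Variables (V : finType).
Local Notation n := #|V|.

Definition hpath (r : rel V) (q : nat -> V) :=
  injn q /\ forall k, k.+1 < n -> r (q k) (q k.+1).
Definition deg (r : rel V) x := #|[set y | r x y]|.
Definition Ore (r : rel V) := forall x y, x != y -> n.+1 <= deg r x + deg r y.

Lemma surj (q : nat -> V) : injn q -> forall v, exists2 i, i < n & q i = v.
Proof.
move=> hq v.
pose f := fun i : 'I_n => q i.
have fi : injective f by move=> i j /hq => h; apply/val_inj/h.
have : f @: setT = setT.
  apply/eqP; rewrite eqEcard subsetT /= cardsT card_imset // cardsT card_ord.
  done.
move=> e; have : v \in f @: setT by rewrite e inE.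
by case/imsetP => i _ ->; exists i.
Qed.

Lemma switch (r : rel V) (rs : symmetric r) (ri : irreflexive r) (ho : Ore r) (q : nat -> V) p :
  injn q -> p.+1 < n -> ~~ r (q p) (q p.+1) ->
  (forall k, k.+1 < n -> k != p -> r (q k) (q k.+1)) ->
  exists q', hpath r q' /\ q' 0 = q 0 /\ q' n.-1 = q n.-1.
Proof.
move=> hq pn nuw hk.
set U := q p; set W := q p.+1.
have UW : U != W by apply/eqP => /hq; lia.
have hd := ho _ _ UW.
pose A := [set j : 'I_n.-1 | r U (q j)].
pose B := [set j : 'I_n.-1 | r W (q j.+1)].
have hA : deg r U <= #|A| + 1.
  pose f := fun j : 'I_n.-1 => q j.
  have : [set y | r U y] \subset f @: A :|: [set q n.-1].
    apply/subsetP => y; rewrite inE => hy.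
    have [t tn qt] := surj hq y.
    rewrite !inE; case: (ltnP t n.-1) => ht.
      apply/orP; left; apply/imsetP; exists (Ordinal ht) => //.
      by rewrite inE /= qt.
    by rewrite -qt; apply/orP; right; apply/eqP; congr q; lia.
  move/subset_leq_card; rewrite /deg => h; apply: leq_trans h _.
  rewrite cardsU cards1; have := leq_imset_card f A; lia.
have hB : deg r W <= #|B| + 1.
  pose f := fun j : 'I_n.-1 => q j.+1.
  have : [set y | r W y] \subset f @: B :|: [set q 0].
    apply/subsetP => y; rewrite inE => hy.
    have [t tn qt] := surj hq y.
    rewrite !inE; case: t tn qt => [|t] tn qt.
      by rewrite -qt eqxx orbT.
    have ht : t < n.-1 by lia.
    apply/orP; left; apply/imsetP; exists (Ordinal ht) => //.
    by rewrite inE /= qt.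
  move/subset_leq_card; rewrite /deg => h; apply: leq_trans h _.
  rewrite cardsU cards1; have := leq_imset_card f B; lia.
have pn' : p < n.-1 by lia.
pose p' := Ordinal pn'.
have hAB : A :|: B \subset [set~ p'].
  apply/subsetP => j; rewrite !inE => /orP[] hj; apply/eqP => ej;
  move: hj; rewrite ej /= ?ri //.
have := subset_leq_card hAB; rewrite cardsC1 card_ord => hc.
have := cardsUI A B => hui.
have : 0 < #|A :&: B| by lia.
case/card_gt0P => j; rewrite !inE => /andP[hjA hjB].
have jp : val j != p by apply/eqP => ej; move: hjA; rewrite ej ri.
have jp1 : j.+1 != p.
  apply/eqP => ej; by move: hjB; rewrite ej -/U rs (negbTE nuw).
have jn := ltn_ord j.
case: (ltnP p j) => hpj.
- exists (flip p.+1 j.+1 q); split; [split|split].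
  + apply: flip_inj => //; lia.
  + apply: (flip_path rs).
    * lia.
    * lia.
    * move=> k kn k1 k2; apply: hk => //; lia.
    * done.
    * done.
  + rewrite flip_out //.
  + rewrite flip_out //; lia.
- have hjp : (j : nat) < p by rewrite ltn_neqAle jp hpj.
  have hjp1 : (j : nat).+1 < p by rewrite ltn_neqAle jp1 hjp.
  exists (flip j.+1 p.+1 q); split; [split|split].
  + apply: flip_inj => //; lia.
  + apply: (flip_path rs).
    * lia.
    * lia.
    * move=> k kn k1 k2; apply: hk => //; lia.
    * by rewrite /= rs.
    * by move=> _; rewrite rs.
  + rewrite flip_out //.
  + rewrite flip_out //; lia.
Qed.

Lemma rot2 (r : rel V) (rs : symmetric r) (ri : irreflexive r) (ho : Ore r) (R : nat -> V) :
  1 < n -> hpath r R -> ~~ r (R 0) (R n.-1) ->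
  exists i1 i2, [/\ i1 != i2, i1.+1 < n, i2.+1 < n,
     r (R 0) (R i1.+1) && r (R n.-1) (R i1) & r (R 0) (R i2.+1) && r (R n.-1) (R i2)].
Proof.
move=> n1 [hR hp] nr.
have d0 : R 0 != R n.-1 by apply/eqP => /hR; lia.
have hd := ho _ _ d0.
pose A := [set j : 'I_n.-1 | r (R 0) (R j.+1)].
pose B := [set j : 'I_n.-1 | r (R n.-1) (R j)].
have hA : deg r (R 0) <= #|A|.
  pose f := fun j : 'I_n.-1 => R j.+1.
  have : [set y | r (R 0) y] \subset f @: A.
    apply/subsetP => y; rewrite inE => hy.
    have [t tn qt] := surj hR y.
    case: t tn qt => [|t] tn qt; first by move: hy; rewrite -qt ri.
    have ht : t < n.-1 by lia.
    by apply/imsetP; exists (Ordinal ht) => //; rewrite inE /= qt.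
  move/subset_leq_card => h; apply: leq_trans h _; exact: leq_imset_card.
have hB : deg r (R n.-1) <= #|B|.
  pose f := fun j : 'I_n.-1 => R j.
  have : [set y | r (R n.-1) y] \subset f @: B.
    apply/subsetP => y; rewrite inE => hy.
    have [t tn qt] := surj hR y.
    case: (ltnP t n.-1) => ht.
      by apply/imsetP; exists (Ordinal ht) => //; rewrite inE /= qt.
    have et : t = n.-1 by lia. by move: hy; rewrite -qt et ri.
  move/subset_leq_card => h; apply: leq_trans h _; exact: leq_imset_card.
have hc : #|A :|: B| <= n.-1 by rewrite -[X in _ <= X]card_ord; apply: max_card.
have := cardsUI A B => hui.
have : 1 < #|A :&: B| by lia.
case/card_gt1P => i1 [i2 [h1 h2 ne]].
move: h1 h2; rewrite !inE => /andP[a1 b1] /andP[a2 b2].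
exists (nat_of_ord i1), (nat_of_ord i2); split.
- exact ne.
- by have := ltn_ord i1; lia.
- by have := ltn_ord i2; lia.
- by rewrite a1 b1.
- by rewrite a2 b2.
Qed.

End Ham.


Section HC.
Variables (V : finType).
Local Notation n := #|V|.

Definition swp (i j k : nat) := if k == i then j else if k == j then i else k.

Lemma injn_comp (q : nat -> V) (s : nat -> nat) : injn q ->
  (forall k, k < n -> s k < n) ->
  (forall a b, a < n -> b < n -> s a = s b -> a = b) -> injn (fun k => q (s k)).
Proof. by move=> hq h1 h2 a b an bn /hq; move/(_ (h1 _ an) (h1 _ bn)); apply: h2. Qed.

Lemma swp_lt i j k : i < n -> j < n -> k < n -> swp i j k < n.
Proof. by rewrite /swp; case: (k =P i); case: (k =P j). Qed.

Lemma swp_inj i j a b : swp i j a = swp i j b -> a = b.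
Proof.
rewrite /swp; case: (a =P i); case: (a =P j); case: (b =P i); case: (b =P j) => //; lia.
Qed.

Lemma complete_hp (r : rel V) : (forall a b, a != b -> r a b) -> 1 < n ->
  forall x y, x != y -> exists q, hpath r q /\ q 0 = x /\ q n.-1 = y.
Proof.
move=> hc n1 x y xy.
pose q0 := fun k => nth x (enum V) k.
have hq0 : injn q0.
  move=> i j hi hj; rewrite /q0 => /eqP; rewrite nth_uniq ?enum_uniq -?cardT //.
  by move/eqP.
have [ix ixn qix] := surj hq0 x.
pose q1 := fun k => q0 (swp 0 ix k).
have hq1 : injn q1.
  apply: injn_comp => //; first by move=> k kn; apply: swp_lt => //; lia.
  by move=> a b _ _; apply: swp_inj.
have q10 : q1 0 = x by rewrite /q1 /swp eqxx.
have [iy iyn qiy] := surj hq1 y.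
have iy0 : iy != 0 by apply/eqP => e; move: xy; rewrite -q10 -qiy e eqxx.
pose q2 := fun k => q1 (swp iy n.-1 k).
have hq2 : injn q2.
  apply: injn_comp => //; first by move=> k kn; apply: swp_lt => //; lia.
  by move=> a b _ _; apply: swp_inj.
exists q2; split; [split|split] => //.
- move=> k kn; apply: hc; apply/eqP => /hq2; lia.
- rewrite /q2 /swp eq_sym (negbTE iy0).
  by have -> : (0 == n.-1) = false by apply: negbTE; apply/eqP; lia.
- by rewrite /q2 /swp; case: (n.-1 =P iy) => [->|_]; rewrite ?eqxx.
Qed.

Definition NE (r : rel V) := [set p : V * V | (p.1 != p.2) && ~~ r p.1 p.2].

Lemma HC_aux m : forall (r : rel V), #|NE r| = m -> symmetric r -> irreflexive r -> Ore r ->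
  1 < n -> forall x y, x != y -> exists q, hpath r q /\ q 0 = x /\ q n.-1 = y.
Proof.
elim/ltn_ind: m => m IH r em rs ri ho n1.
case: (pickP (fun p : V * V => (p.1 != p.2) && ~~ r p.1 p.2)); last first.
  move=> none; apply: complete_hp => // a b ab.
  by have := none (a, b); rewrite /= ab /= => /negbFE.
case=> u v /= /andP[uv nr].
pose r' := fun a b => r a b || ((a == u) && (b == v)) || ((a == v) && (b == u)).
have rs' : symmetric r'.
  by move=> a b; rewrite /r' rs; case: (a == u); case: (a == v); case: (b == u); case: (b == v); rewrite ?orbF ?orbT.
have ri' : irreflexive r'.
  move=> a; rewrite /r' ri /=; apply: negbTE; apply/negP.
  by case/orP => /andP[/eqP e1 /eqP e2]; move: uv; rewrite -e1 -e2 eqxx.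
have sub : forall a, [set b | r a b] \subset [set b | r' a b].
  by move=> a; apply/subsetP => b; rewrite !inE /r' => ->.
have ho' : Ore r'.
  move=> a b ab; apply: leq_trans (ho _ _ ab) _; rewrite /deg.
  by apply: leq_add; apply: subset_leq_card.
have lt : #|NE r'| < m.
  rewrite -em; apply: proper_card; apply/properP; split.
    apply/subsetP => [[a b]]; rewrite !inE /= /r' => /andP[-> /=].
    by rewrite !negb_or => /andP[/andP[]].
  exists (u, v); first by rewrite inE /= uv nr.
  by rewrite inE /= /r' !eqxx /= orbT andbF.
move=> x y xy.
have [q [[hq hpq] [q0 qn]]] := IH _ lt r' erefl rs' ri' ho' n1 x y xy.
case: (boolP [exists k : 'I_n.-1, ~~ r (q k) (q k.+1)]); last first.
  rewrite negb_exists => /forallP hall.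
  exists q; split => //; split => // k kn.
  have kn' : k < n.-1 by lia.
  by have := hall (Ordinal kn'); rewrite negbK.
case/existsP => -[p pn] /= hp.
have pn' : p.+1 < n by lia.
have hpair : forall k, k.+1 < n -> ~~ r (q k) (q k.+1) ->
   ((q k == u) && (q k.+1 == v)) || ((q k == v) && (q k.+1 == u)).
  move=> k kn nk; have := hpq k kn; rewrite /r' (negbTE nk) /=.
  done.
have hk : forall k, k.+1 < n -> k != p -> r (q k) (q k.+1).
  move=> k kn kp; apply/negPn/negP => nk.
  have h1 := hpair _ kn nk; have h2 := hpair _ pn' hp.
  move: h1 h2; case/orP => /andP[/eqP a1 /eqP a2]; case/orP => /andP[/eqP b1 /eqP b2].
  - by move/eqP: kp; apply; apply: (hq k p (ltnW kn) (ltnW pn')); rewrite a1 b1.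
  - by move: (hq k p.+1 (ltnW kn) pn' (etrans a1 (esym b2))) (hq k.+1 p kn (ltnW pn') (etrans a2 (esym b1))); lia.
  - by move: (hq k p.+1 (ltnW kn) pn' (etrans a1 (esym b2))) (hq k.+1 p kn (ltnW pn') (etrans a2 (esym b1))); lia.
  - by move/eqP: kp; apply; apply: (hq k p (ltnW kn) (ltnW pn')); rewrite a1 b1.
have [q' [hq' [e0 e1]]] := switch rs ri ho hq pn' hp hk.
by exists q'; rewrite e0 e1 q0 qn.
Qed.

Lemma HC (r : rel V) : symmetric r -> irreflexive r -> Ore r ->
  1 < n -> forall x y, x != y -> exists q, hpath r q /\ q 0 = x /\ q n.-1 = y.
Proof. exact: (@HC_aux _ r erefl). Qed.


End HC.


Section Color.
Variables (c n : nat).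

Definition sn k := if k.+1 < n then k.+1 else 0.
Definition pn k := if k == 0 then n.-1 else k.-1.

Definition colorable (P : nat -> {set 'I_c}) :=
  exists col : nat -> 'I_c, forall k, k < n -> col k \in P k /\ col k != col (sn k).

Section G0.
Variables (P : nat -> {set 'I_c}) (a : 'I_c).
Fixpoint gcol k := match k with
  | 0 => a
  | k'.+1 => odflt a [pick z in (if k'.+1 == n.-1 then (P k'.+1 :\ a) :\ gcol k'
                               else P k'.+1 :\ gcol k')] end.

Lemma GL0 : 1 < n -> a \in P 0 -> (forall k, 0 < k < n.-1 -> 1 < #|P k|) ->
  1 < #|P n.-1 :\ a| -> colorable P.
Proof.
move=> n1 a0 hm hl.
have step : forall k, k.+1 < n ->
   [/\ gcol k.+1 \in P k.+1, gcol k.+1 != gcol k & (k.+1 == n.-1) ==> (gcol k.+1 != a)].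
  move=> k kn /=; case: pickP => /=.
    move=> z; case: ifP => hk; rewrite !inE.
      by case/and3P => -> -> ->.
    by case/andP => -> ->.
  move=> none; exfalso.
  suff : 0 < #|(if k.+1 == n.-1 then (P k.+1 :\ a) :\ gcol k else P k.+1 :\ gcol k)|.
    by case/card_gt0P => z; rewrite none.
  case: ifP => hk.
    move: hl; rewrite -(eqP hk) (cardsD1 (gcol k) (P k.+1 :\ a)).
    by case: (_ \in _) => /=; rewrite ?add1n ?add0n ?ltnS //; move/ltnW.
  have hk' : k.+1 != n.-1 by rewrite hk.
  have hmk : 1 < #|P k.+1| by apply: hm; lia.
  move: hmk; rewrite (cardsD1 (gcol k) (P k.+1)).
  by case: (_ \in _) => /=; rewrite ?add1n ?add0n ?ltnS //; move/ltnW.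
have mem : forall k, k < n -> gcol k \in P k.
  by case=> [|k] kn //; case: (step k kn).
exists gcol => k kn; split; first exact: mem.
rewrite /sn; case: ltnP => hk.
  by case: (step k hk) => _; rewrite eq_sym.
have ekn : k = n.-1 by lia.
rewrite /=; case: k kn hk ekn => [|k] kn hk ekn; first lia.
have kn' : k.+1 < n by lia.
by case: (step k kn') => _ _; rewrite ekn eqxx.
Qed.
End G0.

Definition rt m k := if k + m < n then k + m else k + m - n.
Definition rti m k := if m <= k then k - m else k + n - m.

Lemma GLm (P : nat -> {set 'I_c}) m a : 1 < n -> m < n -> a \in P m ->
  (forall k, k < n -> k != m -> 1 < #|P k|) -> 1 < #|P (pn m) :\ a| -> colorable P.
Proof.
move=> n1 mn am hk hl.
have [col hcol] : colorable (fun k => P (rt m k)).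
  apply: (@GL0 _ a) => //.
  - by rewrite /rt add0n mn.
  - move=> k /andP[k0 kn]; apply: hk; rewrite /rt; case: (ltnP (k + m) n); lia.
  - suff -> : rt m n.-1 = pn m by [].
    rewrite /rt /pn; case: (ltnP (n.-1 + m) n); case: (m =P 0); lia.
exists (fun k => col (rti m k)) => k kn.
have kn' : rti m k < n by rewrite /rti; case: (leqP m k); lia.
case: (hcol _ kn') => h1 h2; split.
  suff e : rt m (rti m k) = k by move: h1; rewrite e.
  by rewrite /rt /rti; case: (leqP m k) => ?; [case: (ltnP (k - m + m) n) | case: (ltnP (k + n - m + m) n)]; lia.
suff e : sn (rti m k) = rti m (sn k) by move: h2; rewrite e.
rewrite /sn /rti; case: (leqP m k) => ?; case: (ltnP k.+1 n) => ?;
  case: (ltnP (k - m).+1 n) => ?; try case: (ltnP (k + n - m).+1 n) => ?;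
  try case: (leqP m k.+1) => ?; try case: (leqP m 0) => ?; lia.
Qed.

Lemma CLC (P : nat -> {set 'I_c}) : 1 < n -> (forall k, k < n -> 1 < #|P k|) ->
  (~~ odd n \/ (exists k k', [/\ k < n, k' < n & P k != P k']) \/
   exists k, k < n /\ 2 < #|P k|) -> colorable P.
Proof.
move=> n1 h2 hor.
case: (boolP [exists m : 'I_n, ~~ (P m \subset P (pn m))]).
  case/existsP => m /subsetPn [a am anm].
  apply: (@GLm _ m a) => //.
  - by move=> k kn _; apply: h2.
  - have pnm : pn m < n by have := ltn_ord m; rewrite /pn; case: (nat_of_ord m =P 0); lia.
    by move: (h2 _ pnm); rewrite (cardsD1 a (P (pn m))) (negbTE anm) add0n.
rewrite negb_exists => /forallP hs.
have hs' : forall m, m < n -> P m \subset P (pn m).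
  by move=> m mn; have := hs (Ordinal mn); rewrite negbK.
have sub1 : forall k, k < n -> P k \subset P 0.
  elim=> [|k IH] kn //.
  apply: subset_trans (hs' _ kn) _; rewrite /pn /=; apply: IH; lia.
have sub2 : forall d, d < n -> P 0 \subset P (n.-1 - d).
  elim=> [|d IH] dn.
    by have := hs' 0 (ltnW n1); rewrite /pn eqxx subn0.
  apply: subset_trans (IH (ltnW dn)) _.
  have := hs' (n.-1 - d) ltac:(lia); rewrite /pn; case: eqP; first lia.
  by move=> _; have -> : (n.-1 - d).-1 = n.-1 - d.+1 by lia.
have eqP0 : forall k, k < n -> P k = P 0.
  move=> k kn; apply/eqP; rewrite eqEsubset sub1 //=.
  by have := sub2 (n.-1 - k) ltac:(lia); have -> : n.-1 - (n.-1 - k) = k by lia.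
case: hor => [ev|[[k [k' [kn kn' ne]]]|[k [kn k2]]]].
- have := h2 0 (ltnW n1); case/card_gt1P => a [b [ha hb ab]].
  exists (fun k => if odd k then b else a) => k kn; split.
    by rewrite eqP0 //; case: ifP.
  rewrite /sn; case: ltnP => hk /=.
    by case: (odd k) => //; rewrite eq_sym.
  have ek : k = n.-1 by lia.
  case: n n1 ev ek {eqP0 h2 hs hs' sub1 sub2} => [|n'] //= _; rewrite negbK => on ->.
  by rewrite on eq_sym.
- by move: ne; rewrite eqP0 // (eqP0 k') // eqxx.
- have k0 : 2 < #|P 0| by rewrite -(eqP0 k).
  have := ltnW (ltnW k0); case/card_gt0P => a ha.
  apply: (@GL0 _ a) => //.
  + move=> j /andP[_ jn]; rewrite eqP0 //; lia.
  + rewrite eqP0; last lia.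
    by move: k0; rewrite (cardsD1 a) ha.
Qed.

End Color.

Lemma rt_lt n m k : k < n -> m < n -> rt n m k < n.
Proof. by rewrite /rt; case: (ltnP (k + m) n); lia. Qed.
Lemma rt_inj n m a b : a < n -> b < n -> m < n -> rt n m a = rt n m b -> a = b.
Proof. by rewrite /rt; case: (ltnP (a + m) n); case: (ltnP (b + m) n); lia. Qed.
Lemma rt_S n m k : m < n -> k.+1 < n -> rt n m k.+1 = sn n (rt n m k).
Proof.
rewrite /rt /sn => mn kn; case: (ltnP (k + m) n) => h1.
  case: (ltnP (k.+1 + m) n) => h2; case: (ltnP (k + m).+1 n) => h3; lia.
case: (ltnP (k.+1 + m) n) => h2; case: (ltnP (k + m - n).+1 n) => h3; lia.
Qed.
Lemma rt_last n ix : ix < n -> rt n (sn n ix) n.-1 = ix.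
Proof.
rewrite /rt /sn => ixn; case: (ltnP ix.+1 n) => h1.
  case: (ltnP (n.-1 + ix.+1) n) => h2; lia.
case: (ltnP (n.-1 + 0) n) => h2; lia.
Qed.
Lemma rt_0 n m : m < n -> rt n m 0 = m.
Proof. by rewrite /rt add0n => ->. Qed.

Lemma ar_last n k : k < n -> n <= k.+1 -> k = n.-1.
Proof. lia. Qed.
Lemma ar_7 n j : j.+1 + n - 1 - j.+1 = n.-1.
Proof. lia. Qed.
Lemma ar_8 n i : i.+1 < n -> i.+1 <= n.-1.
Proof. lia. Qed.
Lemma ar_9 n i : 0 < n -> i.+1 + n - 1 - n.-1 = i.+1.
Proof. lia. Qed.
Lemma ar_10 n j : odd n -> j < n -> j != n.-1 -> j != 0 -> j != n.-2 -> 2 < n ->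
  0 < j /\ j.+2 < n.
Proof.
move=> on jn j1 j0 j2 n2.
have n4 : n != 4 by apply: contraTneq on => ->.
lia.
Qed.


Section Main.
Variables (V E : finType) (c : nat) (src dst : E -> V) (phi : E -> 'I_c).
Hypothesis noloop : forall e, src e != dst e.
Local Notation n := #|V|.

Definition L a b : {set 'I_c} :=
  [set col | [exists e, joins src dst e a b && (phi e == col)]].
Definition dr a b := 1 < #|L a b|.

Lemma joinsC e a b : joins src dst e a b = joins src dst e b a.
Proof. by rewrite /joins orbC. Qed.

Lemma LC a b : L a b = L b a.
Proof. by apply/setP => z; rewrite !inE; apply: eq_existsb => e; rewrite joinsC. Qed.

Lemma dr_sym : symmetric dr.
Proof. by move=> a b; rewrite /dr LC. Qed.

Lemma dr_irr : irreflexive dr.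
Proof.
move=> a; rewrite /dr.
suff -> : L a a = set0 by rewrite cards0.
apply/setP => z; rewrite !inE; apply/negbTE/existsPn => e.
apply/negP => /andP[/orP[] /andP[/eqP h1 /eqP h2] _];
  by move: (noloop e); rewrite h1 h2 eqxx.
Qed.

Lemma delta_eq x : delta_dym src dst phi x = deg dr x.
Proof.
rewrite /delta_dym /deg; apply: eq_card => y; rewrite !inE /dr.
apply/idP/idP.
- case/existsP => e1 /existsP [e2 /and3P[j1 j2 ne]].
  apply/card_gt1P; exists (phi e1), (phi e2); split => //; rewrite inE; apply/existsP;
    [exists e1 | exists e2]; by rewrite ?j1 ?j2 eqxx.
- case/card_gt1P => a [b [ha hb ab]]; move: ha hb; rewrite !inE.
  case/existsP => e1 /andP[j1 /eqP p1] /existsP [e2 /andP[j2 /eqP p2]].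
  apply/existsP; exists e1; apply/existsP; exists e2; by rewrite j1 j2 p1 p2 ab.
Qed.

Lemma snS k : k.+1 < n -> sn n k = k.+1.
Proof. by rewrite /sn => ->. Qed.

Lemma sn_last : 0 < n -> sn n n.-1 = 0.
Proof. by move=> n0; rewrite /sn; case: ltnP => //; lia. Qed.

Lemma mk (e0 : E) (q : nat -> V) (col : nat -> 'I_c) : 1 < n -> injn q ->
  (forall k, k < n -> col k \in L (q k) (q (sn n k)) /\ col k != col (sn n k)) ->
  has_PC_ham_cycle src dst phi.
Proof.
move=> n1 hq hc.
have snE : forall i : 'I_n, nat_of_ord (ordS i) = sn n i.
  move=> i; rewrite /= /sn; case: (ltnP i.+1 n) => h; first by rewrite modn_small.
  have -> : i.+1 = n by have := ltn_ord i; lia.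
  by rewrite modnn.
pose f := fun i : 'I_n =>
  odflt e0 [pick e | joins src dst e (q i) (q (sn n i)) && (phi e == col i)].
have hf : forall i : 'I_n, joins src dst (f i) (q i) (q (sn n i)) && (phi (f i) == col i).
  move=> i; rewrite /f; case: pickP => //= none.
  have [h _] := hc i (ltn_ord i); move: h; rewrite inE => /existsP [e he].
  by move: (none e); rewrite he.
exists (fun i : 'I_n => q i), f; split.
  by move=> i j /hq h; apply/val_inj/h; apply: ltn_ord.
move=> i; have /andP[j1 /eqP p1] := hf i; have /andP[_ /eqP p2] := hf (ordS i).
rewrite snE; split => //.
by rewrite p1 p2 snE; exact: (hc i (ltn_ord i)).2.
Qed.

Lemma other_end e v : incident src dst e v -> exists w, (w != v) && joins src dst e v w.
Proof.
rewrite /incident /joins; case/orP => /eqP h.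
  exists (dst e); apply/andP; split; first by rewrite -h eq_sym noloop.
  by rewrite h !eqxx.
exists (src e); apply/andP; split; first by rewrite -h noloop.
by rewrite h !eqxx orbT.
Qed.

Lemma main_sec :
  (exists x : V, exists e1 e2 e3 : E,
      [&& incident src dst e1 x, incident src dst e2 x, incident src dst e3 x,
          phi e1 != phi e2, phi e1 != phi e3 & phi e2 != phi e3]) ->
  (forall x y : V, x != y ->
      delta_dym src dst phi x + delta_dym src dst phi y >= n.+1) ->
  has_PC_ham_cycle src dst phi.
Proof.
case=> v [e1 [e2 [e3 /and5P[i1 i2 i3 d12 /andP[d13 d23]]]]] hore.
have ri : irreflexive dr := dr_irr.
have rs : symmetric dr := dr_sym.
have ho : Ore dr by move=> a b ab; rewrite -!delta_eq; exact: hore.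
have degle : forall a, deg dr a <= n.-1.
  move=> a; rewrite /deg -(cardsC1 a); apply: subset_leq_card; apply/subsetP => b.
  by rewrite !inE; apply: contraTneq => ->; rewrite ri.
have [w1 /andP[w1v jw1]] := other_end i1.
have n3 : 2 < n by have := ho _ _ w1v; have := degle w1; have := degle v; lia.
have n1 : 1 < n by lia.
have n0 : 0 < n by lia.
have A1 : n.-1 < n by lia.
have A2 : forall k, k < n -> k != n.-1 -> k.+1 < n by move=> k; lia.
have A3 : pn n n.-1 = n.-2 by rewrite /pn; case: eqP; lia.
have A4 : n.-2.+1 = n.-1 by lia.
have A5 : n.-2.+1 < n by lia.
have edge_of : forall a, 0 < deg dr a -> exists b, a != b /\ dr a b.
  move=> a /card_gt0P [b]; rewrite inE => hb; exists b; split => //.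
  by apply: contraTneq hb => <-; rewrite ri.
have [x0 [y0 [xy0 dxy0]]] : exists x y, x != y /\ dr x y.
  case: (posnP (deg dr v)) => h.
    have h' : 0 < deg dr w1 by have := ho _ _ w1v; lia.
    by have [b hb] := edge_of w1 h'; exists w1, b.
  by have [b hb] := edge_of v h; exists v, b.
have [q [[hq hp] [q0 qn]]] := @HC V dr rs ri ho n1 x0 y0 xy0.
have cyc : forall k, k < n -> dr (q k) (q (sn n k)).
  move=> k kn; rewrite /sn; case: (ltnP k.+1 n) => h; first exact: hp.
  have -> : k = n.-1 by lia.
  by rewrite qn q0 rs.
pose P := fun k => L (q k) (q (sn n k)).
case: (boolP [|| ~~ odd n, [exists k : 'I_n, exists k' : 'I_n, P k != P k']
              | [exists k : 'I_n, 2 < #|P k|]]) => hcase.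
  have [col hcol] : colorable n P.
    apply: CLC => //.
    case/or3P: hcase => [h|/existsP[k /existsP[k' h]]|/existsP[k h]].
    - by left.
    - by right; left; exists (nat_of_ord k), (nat_of_ord k'); split => //; apply: ltn_ord.
    - by right; right; exists (nat_of_ord k); split => //; apply: ltn_ord.
  exact: (mk e1 n1 hq hcol).
move: hcase; rewrite !negb_or negbK => /and3P[hodd hne h3'].
have Peq : forall k, k < n -> P k = P 0.
  move=> k kn; apply/eqP.
  move: hne => /existsPn /(_ (Ordinal kn)) /existsPn /(_ (Ordinal n0)).
  by rewrite negbK.
have cS0 : #|P 0| = 2.
  move: h3' => /existsPn /(_ (Ordinal n0)); rewrite -leqNgt /= => h.
  have h0 : 1 < #|P 0| := cyc 0 n0.
  by apply/eqP; rewrite eqn_leq h h0.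
case: (boolP [exists x, exists y, dr x y && (L x y != P 0)]); last first.
  rewrite negb_exists => /forallP hall'.
  have hall : forall x y, dr x y -> L x y = P 0.
    move=> x y dxy; move: (hall' x); rewrite negb_exists => /forallP /(_ y).
    by rewrite dxy /= negbK => /eqP.
  have [e [ie ne]] : exists e, incident src dst e v /\ phi e \notin P 0.
    case: (boolP (phi e1 \in P 0)) => h1; last by exists e1.
    case: (boolP (phi e2 \in P 0)) => h2; last by exists e2.
    case: (boolP (phi e3 \in P 0)) => h3; last by exists e3.
    exfalso.
    have m2 : phi e2 \in P 0 :\ phi e1 by rewrite in_setD1 eq_sym d12 h2.
    have m3 : phi e3 \in (P 0 :\ phi e1) :\ phi e2.
      by rewrite !in_setD1 eq_sym d23 eq_sym d13 h3.
    move: cS0; rewrite (cardsD1 (phi e1)) h1 (cardsD1 (phi e2) (P 0 :\ phi e1)) m2.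
    rewrite (cardsD1 (phi e3) ((P 0 :\ phi e1) :\ phi e2)) m3.
    by rewrite !addSn !add0n.
  have [w /andP[wv jw]] := other_end ie.
  have gL : phi e \in L v w by rewrite inE; apply/existsP; exists e; rewrite jw eqxx.
  have ndr : ~~ dr v w by apply/negP => h; move: ne; rewrite -(hall _ _ h) gL.
  have [q' [[hq' hp'] [q0' qn']]] := @HC V dr rs ri ho n1 w v wv.
  have [col hcol] : colorable n (fun k => L (q' k) (q' (sn n k))).
    apply: (@GLm c n _ n.-1 (phi e)) => //.
    - by rewrite sn_last // qn' q0'.
    - move=> k kn kn1; have k1 := A2 k kn kn1; rewrite snS //.
      by rewrite hall ?cS0 //; apply: hp'.
    - rewrite A3 snS // A4.
      rewrite hall; last by rewrite -A4; apply: hp'.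
      by move: cS0; rewrite (cardsD1 (phi e) (P 0)) (negbTE ne) add0n => ->.
  exact: (mk e1 n1 hq' hcol).
case/existsP => x /existsP [y /andP[dxy nxy]].
have [ix ixn qix] := surj hq x.
have mn : sn n ix < n by rewrite /sn; case: (ltnP ix.+1 n).
pose Z := fun k => q (rt n (sn n ix) k).
have hZ : injn Z.
  apply: injn_comp => //; first by move=> k kn; exact: rt_lt.
  by move=> a b an bn; exact: rt_inj.
have Zc : forall k, k.+1 < n -> dr (Z k) (Z k.+1) /\ L (Z k) (Z k.+1) = P 0.
  move=> k kn; rewrite /Z rt_S //; have hk := rt_lt (ltnW kn) mn.
  by split; [exact: cyc | exact: Peq].
have Zlast : Z n.-1 = x by rewrite /Z rt_last.
have [j jn qj] := surj hZ y.
have jx : j != n.-1 by apply/eqP => ej; move: dxy; rewrite -qj ej Zlast ri.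
have j0 : j != 0.
  apply/eqP => ej; move: nxy; rewrite -qj ej /Z rt_0 // -qix.
  have e : L (q ix) (q (sn n ix)) = P 0 := Peq ix ixn.
  by rewrite e eqxx.
have jn2 : j != n.-2.
  apply/eqP => ej; have [_ h] := Zc n.-2 A5; move: h; rewrite A4 Zlast -ej qj LC => h.
  by move: nxy; rewrite h eqxx.
have jj : 0 < j /\ j.+2 < n := ar_10 hodd jn jx j0 jn2 n3.
case: jj => jpos jn3.
have jn1 : j.+1 < n := ltnW jn3.
pose R := flip j.+1 n Z.
have hR : hpath dr R.
  split; first by apply: flip_inj.
  apply: (flip_path rs).
  - by rewrite /= jn1.
  - exact: leqnn.
  - by move=> k kn _ _; exact: (Zc k kn).1.
  - by rewrite /= qj Zlast rs.
  - by rewrite ltnn.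
have RL : forall k, k.+1 < n -> k != j -> L (R k) (R k.+1) = P 0.
  move=> k kn kj; rewrite /R.
  have k1 : k.+1 != j.+1 by rewrite eqSS.
  have k2 : k.+1 != n by rewrite neq_ltn kn.
  have [k' [kn' [[-> ->]|[-> ->]]]] := @flip_back V j.+1 n Z k jn1 (leqnn n) kn k1 k2.
  - exact: (Zc k' kn').2.
  - rewrite LC; exact: (Zc k' kn').2.
have Rj : L (R j) (R j.+1) = L x y.
  have -> : R j = y by rewrite /R flip_out; [exact: qj | by rewrite ltnSn].
  have -> : R j.+1 = x.
    rewrite /R /flip leqnn jn1 /=.
    rewrite ar_7.
    exact: Zlast.
  exact: LC.
have Rcyc : dr (R n.-1) (R 0) -> forall k, k < n -> 1 < #|L (R k) (R (sn n k))|.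
  move=> hc k kn; case: (ltnP k.+1 n) => h; first by rewrite snS //; exact: hR.2.
  have -> : k = n.-1 := ar_last kn h.
  by rewrite sn_last.
case: (boolP (dr (R 0) (R n.-1))) => hend.
  have [col hcol] : colorable n (fun k => L (R k) (R (sn n k))).
    apply: CLC => //; first by apply: Rcyc; rewrite rs.
    right; left; exists j, 0; split => //.
    rewrite snS // snS // Rj RL //; last by rewrite eq_sym.
  exact: (mk e1 n1 hR.1 hcol).
have [u1 [u2 [ne12 i1n i2n /andP[a1 b1] /andP[a2 b2]]]] := rot2 rs ri ho n1 hR hend.
have [i [iin ai bi ij]] : exists i, [/\ i.+1 < n, dr (R 0) (R i.+1), dr (R n.-1) (R i) & i != j].
  case: (u1 =P j) => h.
    exists u2; split => //; apply: contraNneq ne12 => e; by rewrite h e.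
  by exists u1; split => //; apply/eqP.
pose s := flip i.+1 n R.
have hs : hpath dr s.
  split; first by apply: (@flip_inj V i.+1 n R); [exact: leqnn | exact: hR.1].
  apply: (@flip_path V dr rs i.+1 n R).
  - by rewrite /= iin.
  - exact: leqnn.
  - by move=> k kn _ _; exact: hR.2.
  - by rewrite /= rs.
  - by rewrite ltnn.
have hclose : dr (s n.-1) (s 0).
  have -> : s 0 = R 0 by rewrite /s (@flip_out V i.+1 n R 0).
  have -> : s n.-1 = R i.+1.
    have h1' : i.+1 <= n.-1 := ar_8 iin.
    rewrite /s /flip h1' A1 /=.
    by rewrite ar_9.
  by rewrite rs.
have [k1 [k1n hk1]] : exists k1, k1.+1 < n /\ L (s k1) (s k1.+1) = L x y.
  rewrite /s; have c1 : j.+1 != i.+1 by rewrite eqSS eq_sym.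
  have c2 : j.+1 != n by rewrite neq_ltn jn1.
  have [k' [kn' hk]] := @flip_track V i.+1 n R j iin (leqnn n) jn1 c1 c2.
  exists k'; split => //; case: hk => [[-> ->]|[-> ->]] //; by rewrite LC.
pose k2 := if i == 0 then j.+1 else 0.
have [k2n k2j k2i] : [/\ k2.+1 < n, k2 != j & k2 != i].
  rewrite /k2; case: (i =P 0) => hi; split => //;
  first [ by rewrite neq_ltn ltnSn orbT | by rewrite hi | by rewrite eq_sym
        | by apply/eqP => e; apply: hi; rewrite -e ].
have [k3 [k3n hk3]] : exists k3, k3.+1 < n /\ L (s k3) (s k3.+1) = P 0.
  rewrite /s; have c1 : k2.+1 != i.+1 by rewrite eqSS.
  have c2 : k2.+1 != n by rewrite neq_ltn k2n.
  have [k' [kn' hk]] := @flip_track V i.+1 n R k2 iin (leqnn n) k2n c1 c2.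
  exists k'; split => //; case: hk => [[-> ->]|[-> ->]]; [by rewrite RL | by rewrite LC RL].
have [col hcol] : colorable n (fun k => L (s k) (s (sn n k))).
  apply: CLC => //.
  - move=> k kn; case: (ltnP k.+1 n) => h; first by rewrite snS //; exact: hs.2.
    have -> : k = n.-1 := ar_last kn h.
    by rewrite sn_last.
  - right; left; exists k1, k3; split; [exact: ltnW | exact: ltnW |].
    by rewrite snS // snS // hk1 hk3.
exact: (@mk e1 s col n1 hs.1 hcol).
Qed.

End Main.


Theorem mainTheorem10 (V E : finType) (c : nat) (src dst : E -> V)
    (phi : E -> 'I_c) :
  (forall e : E, src e != dst e) ->
  (forall x : V, exists e1 e2 : E,
      [&& incident src dst e1 x, incident src dst e2 x & phi e1 != phi e2]) ->
  (exists x : V, exists e1 e2 e3 : E,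
      [&& incident src dst e1 x, incident src dst e2 x, incident src dst e3 x,
          phi e1 != phi e2, phi e1 != phi e3 & phi e2 != phi e3]) ->
  (forall x y : V, x != y ->
      delta_dym src dst phi x + delta_dym src dst phi y >= #|V|.+1) ->
  has_PC_ham_cycle src dst phi.
Proof.
move=> noloop _ h3 h4.
exact: (main_sec noloop h3 h4).
Qed.
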